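(* Let $\mathcal{R}$ be a finite valuation ring with residue field of cardinality $q$ and with uniformizer of nilpotency degree $r$ (so $|\mathcal{R}|=q^r$), and let $\mathcal{R}^*$ denote its group of units. Let $g\colon\mathcal{R}^*\to\mathcal{R}^*$ be a function and let $K\ge1$ be such that $\mu(\psi)\le K$, where $\psi\colon\mathcal{R}^*\to\mathcal{R}$, $\psi(x)=g(x)^2x$. Let $f(x,y)=xy(g(x)+y)$. Then there is a constant $c>0$ depending only on $r$ and $K$ such that for all $A,B,C\subset\mathcal{R}^*$, \[|f(A,B)|\,|B\cdot C|\ \ge\ c\min\left\{q^r|B|,\ \frac{|A||B|^2|C|}{q^{2r-1}}\right\}.\]
   Context: A finite valuation ring is a finite commutative ring with identity that is local (has a unique maximal ideal) and principal (every ideal is principal); its maximal ideal is generated by a non-unit $z$ (a uniformizer), the residue field $\mathcal{R}/(z)$ has $q$ elements, and $r$ is the least integer with $z^r=0$. For a function $\varphi\colon\mathcal{R}^*\to\mathcal{R}$, $\mu(\varphi)=\max_{t\in\mathcal{R}}|\{x\in\mathcal{R}^*:\varphi(x)=t\}|$. Notation: $f(A,B)=\{f(x,y):x\in A,y\in B\}$, $B\cdot C=\{bc:b\in B,c\in C\}$. *)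

(* Defs.v *)
From HB Require Import structures.
From mathcomp Require Import all_boot all_order all_algebra.
Set Implicit Arguments. Unset Strict Implicit. Unset Printing Implicit Defensive.
Import Order.TTheory GRing.Theory Num.Theory.
Local Open Scope ring_scope.

Section FVR.
Variable R : finComUnitRingType.

Definition is_ideal (I : {set R}) : bool :=
  [&& 0 \in I,
      [forall x in I, forall y in I, x + y \in I] &
      [forall a : R, forall x in I, a * x \in I]].

Definition is_maximal_ideal (I : {set R}) : Prop :=
  [/\ is_ideal I, I != setT &
      forall J : {set R}, is_ideal J -> I \subset J -> J = I \/ J = setT].

Definition pideal (a : R) : {set R} := [set a * x | x : R].

Definition is_local : Prop :=
  exists I, is_maximal_ideal I /\ forall J, is_maximal_ideal J -> J = I.

Definition is_principal : Prop :=
  forall I, is_ideal I -> exists a : R, I = pideal a.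

(* R is a finite valuation ring (finite comm. ring, local, principal) and
   z is a uniformizer: z generates the maximal ideal. *)
Definition fvr_uniformizer (z : R) : Prop :=
  [/\ is_local, is_principal & is_maximal_ideal (pideal z)].

Definition residue_card (z : R) : nat :=
  #|[set [set y : R | x - y \in pideal z] | x : R]|.

Definition nilp_degree (z : R) (r : nat) : Prop :=
  z ^+ r = 0 /\ forall k, (k < r)%N -> z ^+ k != 0.

Definition mu (phi : R -> R) : nat :=
  \max_(t : R) #|[set x : R | (x \is a GRing.unit) && (phi x == t)]|.

Definition img2 (h : R -> R -> R) (A B : {set R}) : {set R} :=
  [set h x y | x in A, y in B].

Definition setmul (B C : {set R}) : {set R} := [set b * c | b in B, c in C].

End FVR.

(* Main.v *)
Require Import Defs.
From HB Require Import structures.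
From mathcomp Require Import all_boot all_order all_algebra.
From mathcomp Require Import ring lra zify.
Set Implicit Arguments. Unset Strict Implicit. Unset Printing Implicit Defensive.
Import Order.TTheory GRing.Theory Num.Theory.
Local Open Scope ring_scope.

Lemma card_fibers (T U : finType) (h : T -> U) (S : {set T}) (m : nat) :
  (forall x, x \in S -> #|[set y in S | h y == h x]| = m) ->
  #|S| = (#|h @: S| * m)%N.
Proof.
move=> Hf.
rewrite -sum1_card (partition_big_imset h) /= -sum_nat_const.
apply: eq_bigr => u /imsetP [x xS ->].
by rewrite sum1dep_card -(Hf x xS); apply: eq_card => y; rewrite inE.
Qed.

Section Struct.
Variable R : finComUnitRingType.

Lemma pidealP (a x : R) : reflect (exists y, x = a * y) (x \in pideal a).
Proof.
apply: (iffP imsetP) => [[y _ ->]|[y ->]]; by exists y.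
Qed.

Lemma pideal_ideal (a : R) : is_ideal (pideal a).
Proof.
apply/and3P; split.
- by apply/pidealP; exists 0; rewrite mulr0.
- apply/forallP => x; apply/implyP => /pidealP [u ->].
  apply/forallP => y; apply/implyP => /pidealP [v ->].
  by apply/pidealP; exists (u + v); rewrite mulrDr.
- apply/forallP => b; apply/forallP => x; apply/implyP => /pidealP [u ->].
  by apply/pidealP; exists (b * u); rewrite mulrCA.
Qed.

Lemma ideal_mul (I : {set R}) a x : is_ideal I -> x \in I -> a * x \in I.
Proof. by case/and3P=> _ _ /forallP/(_ a)/forallP/(_ x)/implyP; apply. Qed.

Lemma ideal_unit (I : {set R}) u : is_ideal I -> u \in I -> u \is a GRing.unit -> I = setT.
Proof.
move=> hI uI Uu; apply/setP => x; rewrite inE.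
have -> : x = (x / u) * u by rewrite mulrVK.
exact: ideal_mul.
Qed.

Lemma mem_pideal_self (x : R) : x \in pideal x.
Proof. by apply/pidealP; exists 1; rewrite mulr1. Qed.

Variable z : R.
Hypothesis hz : fvr_uniformizer z.

Lemma unit_notin (u : R) : u \is a GRing.unit -> u \notin pideal z.
Proof.
move=> Uu; apply/negP => uM.
case: hz => _ _ [_ /negP nT _]; apply: nT; apply/eqP.
exact: (ideal_unit (pideal_ideal z) uM Uu).
Qed.

Lemma nonunit_in (x : R) : x \isn't a GRing.unit -> x \in pideal z.
Proof.
move=> nUx.
pose Pj (J : {set R}) := [&& is_ideal J, J != setT & pideal x \subset J].
have P0 : Pj (pideal x).
  rewrite /Pj pideal_ideal subxx andbT /=; apply/negP => /eqP E.
  have : 1 \in pideal x by rewrite E inE.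
  case/pidealP => y /esym ?; apply/negP: nUx; rewrite negbK.
  by apply/unitrPr; exists y.
case: (@arg_maxnP {set R} _ Pj (fun J : {set R} => #|J|) P0) => J /and3P [iJ nJ sJ] Jmax.
have mJ : is_maximal_ideal J.
  split => // J' iJ' sJJ'.
  case E : (J' == setT); first by right; apply/eqP.
  left; apply/eqP; rewrite eq_sym eqEcard sJJ' /=.
  apply: Jmax; rewrite /Pj iJ' E /=; exact: subset_trans sJ sJJ'.
case: hz => [[I [_ uI]] _ mz].
have -> : pideal z = J by rewrite (uI _ mz) (uI _ mJ).
exact: (subsetP sJ _ (mem_pideal_self x)).
Qed.

Lemma inM_D (x y : R) : x \in pideal z -> y \in pideal z -> x + y \in pideal z.
Proof. by move=> /pidealP[u ->] /pidealP[v ->]; apply/pidealP; exists (u+v); rewrite mulrDr. Qed.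
Lemma inM_N (x : R) : x \in pideal z -> - x \in pideal z.
Proof. by move=> /pidealP[u ->]; apply/pidealP; exists (-u); rewrite mulrN. Qed.
Lemma inM_B (x y : R) : x \in pideal z -> y \in pideal z -> x - y \in pideal z.
Proof. by move=> ? ?; apply: inM_D => //; apply: inM_N. Qed.

Lemma card_transl (S : {set R}) (x0 : R) :
  #|[set y | y - x0 \in S]| = #|S|.
Proof.
rewrite -(card_imset (mem S) (addIr x0)); apply: eq_card => y.
rewrite inE; apply/idP/imsetP => [H|[w wS ->]]; last by rewrite addrK.
by exists (y - x0) => //; rewrite subrK.
Qed.

Lemma residue_eq : #|[set: R]| = (residue_card z * #|pideal z|)%N.
Proof.
rewrite /residue_card.
have -> : [set [set y : R | x - y \in pideal z] | x : R] =
          (fun x => [set y : R | x - y \in pideal z]) @: [set: R].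
  by apply/setP => s; apply/imsetP/imsetP => [[x _ ->]|[x _ ->]]; exists x.
apply: card_fibers => x0 _.
rewrite -(card_transl (pideal z) x0); apply: eq_card => y; rewrite !inE.
apply/eqP/idP => [E | H].
- have : y \in [set y0 : R | y - y0 \in pideal z].
    by rewrite inE subrr; apply/pidealP; exists 0; rewrite mulr0.
  by rewrite E inE => /inM_N; rewrite opprB.
- apply/setP => w; rewrite !inE; apply/idP/idP => H2.
  + by move: (inM_B H2 H); rewrite (_ : (y - w) - (y - x0) = x0 - w) //; ring.
  + by move: (inM_D H2 H); rewrite (_ : (x0 - w) + (y - x0) = y - w) //; ring.
Qed.

Variable r : nat.
Hypothesis hr : nilp_degree z r.

Definition annz k := [set x : R | z ^+ k * x == 0].

Lemma annz_sub k x : (k < r)%N -> x \in annz k -> x \in pideal z.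
Proof.
move=> kr; rewrite inE => /eqP H; case U : (x \is a GRing.unit).
  by case: hr => _ /(_ k kr); rewrite -(mulrK U (z ^+ k)) H mul0r eqxx.
by apply: nonunit_in; rewrite U.
Qed.

Lemma card_Ik k : (#|pideal (z ^+ k)| * #|annz k|)%N = #|[set: R]|.
Proof.
have -> : pideal (z ^+ k) = (fun x => z ^+ k * x) @: [set: R].
  by apply/setP => s; apply/imsetP/imsetP => [[x _ ->]|[x _ ->]]; exists x.
apply/esym/card_fibers => x0 _.
rewrite -(card_transl (annz k) x0); apply: eq_card => y; rewrite !inE.
by rewrite mulrBr subr_eq0.
Qed.

Lemma card_Ik1 k : (k < r)%N -> (#|pideal (z ^+ k.+1)| * #|annz k|)%N = #|pideal z|.
Proof.
move=> kr.
have -> : pideal (z ^+ k.+1) = (fun x => z ^+ k * x) @: pideal z.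
  apply/setP => s; apply/imsetP/imsetP => [[x _ ->]|[x /pidealP [u ->] ->]].
    by exists (z * x); [apply/pidealP; exists x | rewrite exprS mulrCA mulrA (mulrC z) -exprSr].
  by exists u => //; rewrite mulrA -exprSr.
apply/esym/card_fibers => x0 x0M.
rewrite -(card_transl (annz k) x0); apply: eq_card => y; rewrite !inE.
apply/andP/idP => [[_ /eqP E]|H]; first by rewrite mulrBr E subrr.
split; last by move: H; rewrite mulrBr subr_eq0.
have Hy : y - x0 \in annz k by rewrite inE.
by have := inM_D (annz_sub kr Hy) x0M; rewrite subrK.
Qed.

Lemma r_pos : (0 < r)%N.
Proof. case: hr; case: r => // /eqP; by rewrite expr0 oner_eq0. Qed.

Lemma card_step k : (k < r)%N ->
  #|pideal (z ^+ k)| = (residue_card z * #|pideal (z ^+ k.+1)|)%N.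
Proof.
move=> kr.
have a0 : (0 < #|annz k|)%N by apply/card_gt0P; exists 0; rewrite inE mulr0.
apply/eqP; rewrite -(eqn_pmul2r a0) -mulnA card_Ik1 // card_Ik residue_eq //.
Qed.

Lemma cardR : #|[set: R]| = (residue_card z ^ r)%N.
Proof.
have H : forall j, (j <= r)%N -> #|pideal (z ^+ (r - j)%N)| = (residue_card z ^ j)%N.
  elim=> [_|j IH jr].
    rewrite subn0 expn0; case: hr => -> _.
    rewrite (_ : pideal 0 = [set 0]) ?cards1 //.
    by apply/setP => s; rewrite inE; apply/pidealP/eqP => [[y ->]|->]; [rewrite mul0r|exists 0; rewrite mul0r].
  have e : ((r - j.+1).+1 = r - j)%N by rewrite subnSK.
  rewrite card_step; last by rewrite ltn_subrL r_pos.
  by rewrite e IH ?expnS //; apply: ltnW.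
have := H r (leqnn r); rewrite subnn expr0 => <-.
apply: eq_card => s; rewrite inE; symmetry; apply/pidealP; exists s; by rewrite mul1r.
Qed.
End Struct.

Lemma CS (I : finType) (D : {pred I}) (x : I -> rat) :
  (\sum_(i in D) x i) ^+ 2 <= #|D|%:R * \sum_(i in D) x i ^+ 2.
Proof.
have [D0|kp] := eqVneq #|D| 0%N.
  have -> : \sum_(i in D) x i = 0.
    rewrite big_pred0 // => i; apply/negbTE/negP => iD.
    by move: D0; apply/eqP; rewrite -lt0n; apply/card_gt0P; exists i.
  by rewrite expr0n /= D0 mul0r.
set s := \sum_(i in D) x i; set k : rat := #|D|%:R.
have H : 0 <= \sum_(i in D) (k * x i - s) ^+ 2 by apply: sumr_ge0 => i _; rewrite sqr_ge0.
rewrite (eq_bigr (fun i => k ^+ 2 * x i ^+ 2 + ((- (2 * k * s)) * x i + s ^+ 2))) in H;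
  last by move=> i _; ring.
rewrite !big_split /= in H.
set t := \sum_(i in D) x i ^+ 2 in H *.
have e1 : \sum_(i in D) k ^+ 2 * x i ^+ 2 = k ^+ 2 * t by rewrite -mulr_sumr.
have e2 : \sum_(i in D) (- (2 * k * s)) * x i = - (2 * k * s) * s by rewrite -mulr_sumr.
have e3 : \sum_(i in D) s ^+ 2 = s ^+ 2 * k by rewrite sumr_const mulr_natr.
rewrite e1 e2 e3 in H.
have kpos : 0 < k by rewrite ltr0n lt0n.
have : 0 <= k * (k * t - s ^+ 2) by move: H; rewrite (_ : k ^+ 2 * t + (- (2 * k * s) * s + s ^+ 2 * k) = k * (k * t - s ^+ 2)) //; ring.
rewrite pmulr_rge0 // subr_ge0 //.
Qed.

Lemma arith (a b cc p u Q E K T Z : rat) :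
  0 < Q -> 0 < E -> 1 <= K -> 0 <= a -> 0 <= b -> 0 <= cc ->
  p <= Z -> 0 <= p -> p = u * Q -> a * b * cc <= T ->
  (T - u * (a * cc)) ^+ 2 <= a * cc * K * p * E ->
  (4 * K)^-1 * Num.min (Q * b) (a * b ^+ 2 * cc / E) <= Z.
Proof.
move=> Q0 E0 K1 a0 b0 c0 pZ p0 pu NT DT.
have K0 : 0 < 4 * K by lra.
have iK0 : 0 < (4 * K)^-1 by rewrite invr_gt0.
have u0 : 0 <= u by move: p0; rewrite pu pmulr_lge0.
have Hm1 : Num.min (Q * b) (a * b ^+ 2 * cc / E) <= Q * b by rewrite ge_min lexx.
have Hm2 : Num.min (Q * b) (a * b ^+ 2 * cc / E) <= a * b ^+ 2 * cc / E by rewrite ge_min lexx orbT.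
have [Phi0|Phip] := eqVneq (a * cc) 0.
  have e : a * b ^+ 2 * cc / E = 0.
    by rewrite (_ : a * b ^+ 2 * cc = (a * cc) * b ^+ 2); [rewrite Phi0 !mul0r | ring].
  rewrite e in Hm2 *.
  apply: le_trans pZ; apply: le_trans p0; rewrite pmulr_rle0 //.
have Phi : 0 < a * cc by rewrite lt_def Phip mulr_ge0.
case: (lerP (a * b * cc / 2) (u * (a * cc))) => hc.
-
  have hp : Q * b / 2 <= p.
    rewrite pu; have : (a * cc) * (b / 2) <= (a * cc) * u.
      have e1 : (a * cc) * (b / 2) = a * b * cc / 2 by ring.
      have e2 : (a * cc) * u = u * (a * cc) by ring.
      by rewrite e1 e2.
    rewrite ler_pM2l // => hb; nra.
  apply: le_trans pZ; apply: le_trans hp.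
  apply: le_trans (ler_wpM2l (ltW iK0) Hm1) _.
  have : (4 * K)^-1 <= 4^-1 by rewrite lef_pV2 ?posrE //; lra.
  have Qb : 0 <= Q * b by rewrite mulr_ge0 // ltW.
  move=> h; apply: le_trans (ler_wpM2r Qb h) _; lra.
- have hD : a * b * cc / 2 < T - u * (a * cc) by lra.
  have hD2 : (a * b * cc / 2) ^+ 2 <= a * cc * K * p * E.
    have n1 : 0 <= a * b * cc / 2 by rewrite !mulr_ge0 // invr_ge0 ler0n.
    apply: le_trans DT; rewrite !expr2; apply: ler_pM => //; exact: ltW.
  have h3 : a * b ^+ 2 * cc <= 4 * K * p * E.
    have : (a * cc) * (a * b ^+ 2 * cc) <= (a * cc) * (4 * K * p * E).
      move: hD2; rewrite (_ : (a * b * cc / 2) ^+ 2 = (a * cc) * (a * b ^+ 2 * cc) / 4); last by field.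
      move=> h; rewrite (_ : (a * cc) * (4 * K * p * E) = 4 * (a * cc * K * p * E)); last by ring.
      lra.
    by rewrite ler_pM2l.
  have h4 : (4 * K)^-1 * (a * b ^+ 2 * cc / E) <= p.
    rewrite mulrC ler_pdivrMr // ler_pdivrMr //.
    by rewrite (_ : p * (4 * K) * E = 4 * K * p * E) //; ring.
  apply: (le_trans _ pZ); apply: (le_trans _ h4). apply: ler_wpM2l => //; exact: ltW.
Qed.

Lemma mu_ge (R : finComUnitRingType) (phi : R -> R) t :
  (#|[set x | (x \is a GRing.unit) && (phi x == t)]| <= mu phi)%N.
Proof. rewrite /mu.
set Fset := (fun t0 : R => #|[set x | (x \is a GRing.unit) && (phi x == t0)]|).
have := @leq_bigmax _ Fset t. rewrite /Fset. move=> H. exact: H.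
Qed.

Section Main.
Variable R : finComUnitRingType.
Variable g : R -> R.
Variable K : nat.
Hypothesis gU : forall x : R, x \is a GRing.unit -> g x \is a GRing.unit.
Hypothesis hmu : (mu (fun x => (g x ^+ 2 * x)%R) <= K)%N.
Variables A B C : {set R}.
Hypothesis AU : {subset A <= [pred x | x \is a GRing.unit]}.
Hypothesis BU : {subset B <= [pred x | x \is a GRing.unit]}.
Hypothesis CU : {subset C <= [pred x | x \is a GRing.unit]}.

Definition f (x y : R) := x * y * (g x + y).
Definition Fset := img2 f A B.
Definition Sset := setmul B C.
Definition Pset : {set R * R} := [set (s, t / s) | s in Sset, t in Fset].
Definition onl (p l : R * R) := p.2 == l.1 + l.2 * p.1.
Definition nl (l : R * R) := #|[set p in Pset | onl p l]|.
Definition line (ac : R * R) : R * R := (ac.1 * g ac.1 / ac.2, ac.1 / ac.2 ^+ 2).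

Lemma cardP : (#|Pset| <= #|Fset| * #|Sset|)%N.
Proof.
rewrite /Pset curry_imset2X; apply: leq_trans (leq_imset_card _ _) _.
by rewrite cardsX mulnC.
Qed.

Lemma L1 a c : a \in A -> c \in C -> (#|B| <= nl (line (a, c)))%N.
Proof.
move=> aA cC; have Ua := AU aA; have Uc := CU cC.
rewrite /nl -(@card_in_imset _ _ (fun b => (b * c, f a b / (b * c))) B).
  apply: subset_leq_card; apply/subsetP => p /imsetP [b bB ->].
  have Ub := BU bB.
  rewrite inE; apply/andP; split.
    apply/imset2P; exists (b * c) (f a b) => //.
      by apply/imset2P; exists b c.
    by apply/imset2P; exists a b.
  rewrite /onl /= /f invrM // -exprVn.
  have E1 : a * b * (g a + b) * (c^-1 / b) = a * (g a + b) * c^-1 * (b / b) by ring.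
  have E2 : a * g a / c + a * c^-1 ^+ 2 * (b * c) = a * g a * c^-1 + a * b * c^-1 * (c / c) by ring.
  by rewrite E1 E2 !divrr // !mulr1; apply/eqP; ring.
move=> b1 b2 b1B b2B [] E _.
exact: (mulIr Uc E).
Qed.

Lemma psi_line (a c : R) : a \is a GRing.unit -> c \is a GRing.unit ->
  (line (a, c)).1 ^+ 2 = (g a ^+ 2 * a) * (line (a, c)).2.
Proof. move=> Ua Uc; rewrite /line /= -exprVn; ring. Qed.

Lemma L2 l : (#|[set ac in setX A C | line ac == l]| <= K)%N.
Proof.
set W := [set ac in setX A C | line ac == l].
case: (set_0Vmem W) => [->|[ac0 ac0W]]; first by rewrite cards0.
apply: leq_trans hmu.
have inv (ac : R * R) : ac \in W -> [/\ ac.1 \is a GRing.unit, ac.2 \is a GRing.unit & line ac = l].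
  rewrite !inE => /andP [/andP [h1 h2] /eqP h3]; split => //; [exact: AU | exact: CU].
pose t := g ac0.1 ^+ 2 * ac0.1.
apply: (leq_trans _ (mu_ge _ t)).
rewrite -(@card_in_imset _ _ fst W).
  apply: subset_leq_card; apply/subsetP => x /imsetP [ac acW ->].
  have [U1 U2 L] := inv ac acW; have [V1 V2 L0] := inv ac0 ac0W.
  rewrite inE U1 /=; apply/eqP.
  have h1 := psi_line U1 U2; have h0 := psi_line V1 V2.
  rewrite -!surjective_pairing L in h1; rewrite -!surjective_pairing L0 in h0.
  have Ub : l.2 \is a GRing.unit by rewrite -L /line /= unitrM U1 unitrV unitrX.
  by apply: (mulIr Ub); rewrite -h1 -h0.
move=> [a c] [a' c'] acW acW' /= E; subst a'.
have [U1 U2 L] := inv _ acW; have [_ U2' L'] := inv _ acW'.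
move: L; rewrite -L' /line /= => [[E1 _]].
have Ug : a * g a \is a GRing.unit by rewrite unitrM U1 gU.
have := mulrI Ug E1; move/invr_inj => -> //.
Qed.

Lemma card_sum (T : finType) (X : {set T}) (Q : pred T) :
  #|[set p in X | Q p]| = (\sum_(p in X) (Q p : nat))%N.
Proof.
rewrite -sum1dep_card big_mkcondr /=; apply: eq_bigr => p _; by case: (Q p).
Qed.

Lemma card_sumT (T : finType) (Q : pred T) :
  #|[set p | Q p]| = (\sum_p (Q p : nat))%N.
Proof.
rewrite -sum1dep_card big_mkcond /=; apply: eq_bigr => p _; by case: (Q p).
Qed.

Lemma lines_through (p : R * R) : #|[set l | onl p l]| = #|[set: R]|.
Proof.
have -> : [set l | onl p l] = (fun b => (p.2 - b * p.1, b)) @: [set: R].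
  apply/setP => l; rewrite inE /onl; apply/eqP/imsetP => [E|[b _ ->]] /=.
    by exists l.2 => //; rewrite E addrK -surjective_pairing.
  by rewrite subrK.
by apply: card_imset => b1 b2 [].
Qed.

Lemma L3 : (\sum_l nl l = #|Pset| * #|[set: R]|)%N.
Proof.
rewrite /nl; under eq_bigr do rewrite card_sum.
rewrite exchange_big /= -sum_nat_const; apply: eq_bigr => p _.
by rewrite -card_sumT lines_through.
Qed.

Variable z : R.
Hypothesis hz : fvr_uniformizer z.

Lemma unit_pair (p p' : R * R) : (p'.1 - p.1) \is a GRing.unit ->
  (#|[set l | onl p l && onl p' l]| <= 1)%N.
Proof.
move=> Ud; apply/card_le1_eqP => l l'; rewrite !inE /onl.
move=> /andP [/eqP h1 /eqP h2] /andP [/eqP h3 /eqP h4].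
have e2 : l.2 = l'.2.
  apply: (mulIr Ud).
  rewrite (_ : l.2 * (p'.1 - p.1) = p'.2 - p.2); last by rewrite h1 h2; ring.
  by rewrite h3 h4; ring.
have e1 : l.1 = l'.1 by move: h1; rewrite h3 e2 => /addIr.
by case: l l' e1 e2 {h1 h2 h3 h4} => [a b] [c d] /= -> ->.
Qed.

Lemma nonunit_line (p l : R * R) :
  (#|[set p' | onl p' l && ((p'.1 - p.1)%R \isn't a GRing.unit)]| <= #|pideal z|)%N.
Proof.
apply: leq_trans (leq_imset_card (fun u => (p.1 + u, l.1 + l.2 * (p.1 + u))) (pideal z)).
apply: subset_leq_card; apply/subsetP => p'; rewrite inE /onl => /andP [/eqP h hu].
apply/imsetP; exists (p'.1 - p.1); first exact: (nonunit_in hz).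
by rewrite addrC subrK -h -surjective_pairing.
Qed.

Lemma L4p (p : R * R) :
  (\sum_l (onl p l : nat) * nl l <= #|Pset| + #|[set: R]| * #|pideal z|)%N.
Proof.
pose U (p' : R * R) := (p'.1 - p.1) \is a GRing.unit.
have split_nl l : nl l = (#|[set p' in Pset | onl p' l && U p']| + #|[set p' in Pset | onl p' l && ~~ U p']|)%N.
  rewrite /nl !card_sum -big_split /=; apply: eq_bigr => p' _.
  by case: (onl p' l); case: (U p').
under eq_bigr do rewrite split_nl mulnDr.
rewrite big_split /=; apply: leq_add.
- under eq_bigr do rewrite card_sum big_distrr /=.
  rewrite exchange_big /= -sum1_card; apply: leq_sum => p' _.
  case Up : (U p'); last by rewrite big1 // => l _; rewrite !andbF !muln0.
  apply: leq_trans (unit_pair Up); rewrite card_sumT; apply: leq_sum => l _.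
  by case: (onl p l); case: (onl p' l).
- apply: (@leq_trans (\sum_l (onl p l : nat) * #|pideal z|)).
    apply: leq_sum => l _; apply: leq_mul => //.
    apply: leq_trans (nonunit_line p l); apply: subset_leq_card.
    by apply/subsetP => p'; rewrite !inE => /andP [_ ->].
  by rewrite -big_distrl /= -card_sumT lines_through.
Qed.

Lemma L4 : (\sum_l nl l ^ 2 <= #|Pset| * (#|Pset| + #|[set: R]| * #|pideal z|))%N.
Proof.
have -> : (\sum_l nl l ^ 2 = \sum_(p in Pset) \sum_l (onl p l : nat) * nl l)%N.
  rewrite exchange_big /=; apply: eq_bigr => l _.
  by rewrite -big_distrl /= -card_sum -/(nl l) expnS expn1.
rewrite -sum_nat_const; apply: leq_sum => p _; exact: L4p.
Qed.

Lemma weight (h : R * R -> rat) : (forall l, 0 <= h l) ->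
  \sum_(ac in setX A C) h (line ac) <= K%:R * \sum_l h l.
Proof.
move=> h0; rewrite (partition_big line predT) //= mulr_sumr; apply: ler_sum => l _.
rewrite (eq_bigr (fun _ => 1 * h l)); last by move=> ac /andP [_ /eqP ->]; rewrite mul1r.
rewrite -mulr_suml; apply: ler_wpM2r => //.
rewrite -(natr_sum _ _ _ (fun _ => 1%N)) sum1dep_card ler_nat; exact: L2.
Qed.

Lemma sumT : ((#|A| * #|B| * #|C|)%N%:R : rat) <= \sum_(ac in setX A C) (nl (line ac))%:R.
Proof.
rewrite -natr_sum ler_nat.
apply: (@leq_trans (\sum_(ac in setX A C) #|B|)).
  by rewrite sum_nat_const cardsX mulnC mulnCA mulnA.
apply: leq_sum => [[a c]]; rewrite inE /= => /andP [aA cC]; exact: L1.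
Qed.

Definition mu0 : rat := #|Pset|%:R / #|[set: R]|%:R.

Lemma Qpos : (0 < #|[set: R]|)%N.
Proof. by apply/card_gt0P; exists 0; rewrite inE. Qed.

Lemma variance :
  \sum_l ((nl l)%:R - mu0) ^+ 2 <= (#|Pset| * (#|[set: R]| * #|pideal z|))%N%:R.
Proof.
set Q : rat := #|[set: R]|%:R.
have Q0 : Q != 0 by rewrite pnatr_eq0 -lt0n Qpos.
rewrite (eq_bigr (fun l => (nl l)%:R ^+ 2 + (- (2 * mu0) * (nl l)%:R + mu0 ^+ 2)));
  last by move=> l _; ring.
rewrite !big_split /= -mulr_sumr sumr_const -natr_sum L3.
rewrite (eq_bigr (fun l => ((nl l ^ 2)%N)%:R)); last by move=> l _; rewrite natrX.
rewrite -natr_sum.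
have h4 := L4; rewrite -(ler_nat rat) in h4.
have cardRR : #|{: R * R}| = (#|[set: R]| * #|[set: R]|)%N by rewrite card_prod cardsT.
rewrite cardRR -[mu0 ^+ 2 *+ _]mulr_natr.
have e : - (2 * mu0) * (#|Pset| * #|[set: R]|)%N%:R + mu0 ^+ 2 * (#|[set: R]| * #|[set: R]|)%N%:R
         = - (#|Pset|%:R ^+ 2).
  rewrite !natrM -/Q /mu0 -/Q; field; exact: Q0.
rewrite e; move: h4; rewrite !natrM; lra.
Qed.

Lemma Dbound :
  (\sum_(ac in setX A C) (nl (line ac))%:R - mu0 * (#|A| * #|C|)%N%:R) ^+ 2
    <= (#|A| * #|C|)%N%:R * K%:R * (#|Pset| * (#|[set: R]| * #|pideal z|))%N%:R.
Proof.
have -> : \sum_(ac in setX A C) (nl (line ac))%:R - mu0 * (#|A| * #|C|)%N%:R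
          = \sum_(ac in setX A C) ((nl (line ac))%:R - mu0).
  by rewrite sumrB sumr_const cardsX mulr_natr.
have h := CS (setX A C) (fun ac => (nl (line ac))%:R - mu0).
apply: (le_trans h); rewrite cardsX -mulrA ler_wpM2l //.
have hw := @weight (fun l => ((nl l)%:R - mu0) ^+ 2) (fun l => sqr_ge0 (((nl l)%:R - mu0) : rat)).
apply: (le_trans hw).
rewrite ler_wpM2l //; exact: variance.
Qed.
End Main.

Theorem theorem1p15 :
  forall (r K : nat), (1 <= K)%N ->
  exists c : rat, 0 < c /\
  forall (R : finComUnitRingType) (z : R) (g : R -> R),
    fvr_uniformizer z ->
    nilp_degree z r ->
    (forall x : R, x \is a GRing.unit -> g x \is a GRing.unit) ->
    (mu (fun x => (g x ^+ 2 * x)%R) <= K)%N ->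
    forall A B C : {set R},
      {subset A <= [pred x | x \is a GRing.unit]} ->
      {subset B <= [pred x | x \is a GRing.unit]} ->
      {subset C <= [pred x | x \is a GRing.unit]} ->
      let q := residue_card z in
      let f := fun x y : R => x * y * (g x + y) in
      c * Num.min ((q ^ r * #|B|)%N%:R)
                  ((#|A| * #|B| ^ 2 * #|C|)%N%:R / (q ^ (2 * r - 1))%N%:R)
        <= (#|img2 f A B| * #|setmul B C|)%N%:R.
Proof.
move=> r K K1; exists (4 * K%:R)^-1; split.
  by rewrite invr_gt0 mulr_gt0 // ltr0n.
move=> R z g hz hr gU hmu A B C AU BU CU; rewrite /=.
set q := residue_card z.
set f := fun x y : R => x * y * (g x + y).
have cR := cardR hz hr; have re := residue_eq z; have r0 := r_pos hr.
set Q := #|[set: R]| in cR re.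
set m := #|pideal z| in re.
have q0 : (0 < q)%N.
  have := Qpos R; rewrite -/Q re muln_gt0 => /andP [] //.
have Em : (Q * m = q ^ (2 * r - 1))%N.
  apply/eqP; rewrite -(eqn_pmul2l q0) mulnCA -re -expnS.
  rewrite (_ : (2 * r - 1).+1 = 2 * r)%N; last by rewrite subn1 prednK // muln_gt0.
  by rewrite cR -expnD addnn -mul2n.
have DT := Dbound gU hmu B AU CU hz.
rewrite -/Q -/m in DT.
have NT := sumT g AU BU CU.
have pZ : (#|Pset g A B C|%:R : rat) <= (#|img2 f A B| * #|setmul B C|)%N%:R.
  by rewrite ler_nat; exact: cardP.
have p0 : (0 : rat) <= #|Pset g A B C|%:R by [].
have Q0 : (0 : rat) < Q%:R by rewrite ltr0n; exact: Qpos.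
have pu : (#|Pset g A B C|%:R : rat) = mu0 g A B C * Q%:R.
  by rewrite /mu0 -/Q mulfVK // gt_eqF.
rewrite -Em -cR -/Q.
have := @arith #|A|%:R #|B|%:R #|C|%:R #|Pset g A B C|%:R (mu0 g A B C) Q%:R (Q * m)%N%:R K%:R
  _ _ Q0 _ _ (ler0n _ _) (ler0n _ _) (ler0n _ _) pZ p0 pu.
rewrite !natrM expr2; apply.
- by rewrite -natrM ltr0n Em expn_gt0 q0.
- by rewrite ler1n.
- move: NT; rewrite !natrM => h; exact: h.
- by move: DT; rewrite !natrM !mulrA.

Qed.
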